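(* Let $p$ be prime, $r,k\ge1$, and $\mu\in\mathrm{GL}_r(\mathbb{Z}_p)$ with $\mu^p=I$. For $b\in\{0,\dots,p-1\}$ let $M_b:=\sum_{i=0}^{b-1}\mu^i$. For $x\in(\mathbb{Z}_p^r)^k$ and $w\in\mathbb{Z}_p^r$ let $\eta^x_w:=|\{b\in\{0,\dots,p-1\}^k:\sum_{j=1}^k M_{b_j}x_j=w\}|$. For $(x,w)$ uniformly random, $\mathbb{E}[\eta^x_w]=p^{k-r}$ and $\mathrm{Var}(\eta^x_w)=p^{k-r}(1-p^{-r})$. *)

(* Defs.v *)
From mathcomp Require Import all_boot all_order all_algebra.
Set Implicit Arguments. Unset Strict Implicit. Unset Printing Implicit Defensive.
Import Order.TTheory GRing.Theory Num.Theory.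
Local Open Scope ring_scope.

Definition Mb (p r : nat) (mu : 'M['F_p]_r) (b : nat) : 'M['F_p]_r :=
  \sum_(i < b) mu ^+ i.

Definition eta (p r k : nat) (mu : 'M['F_p]_r)
    (x : {ffun 'I_k -> 'cV['F_p]_r}) (w : 'cV['F_p]_r) : nat :=
  #|[set b : {ffun 'I_k -> 'I_p} | \sum_(j < k) (Mb mu (b j) *m x j) == w]|.

Definition unif_mean (T : finType) (f : T -> rat) : rat :=
  (\sum_(t : T) f t) / #|T|%:R.
Definition unif_var (T : finType) (f : T -> rat) : rat :=
  unif_mean (fun t => (f t - unif_mean f) ^+ 2).

(* Main.v *)
Require Import Defs.
From mathcomp Require Import all_boot all_order all_algebra.
From mathcomp Require Import ring.
Set Implicit Arguments. Unset Strict Implicit. Unset Printing Implicit Defensive.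
Import Order.TTheory GRing.Theory Num.Theory.
Local Open Scope ring_scope.

Lemma sum_eq1 (T : finType) (a : T) (F : T -> rat) :
  \sum_i (a == i)%:R * F i = F a.
Proof.
rewrite (bigD1 a) //= eqxx mul1r big1 ?addr0 // => i ia.
by rewrite eq_sym (negbTE ia) mul0r.
Qed.

Lemma sum_eq1' (T : finType) (a : T) : \sum_i ((a == i)%:R : rat) = 1.
Proof.
transitivity (\sum_i (a == i)%:R * (1:rat)); first by apply: eq_bigr => i _; rewrite mulr1.
exact: (sum_eq1 a (fun _ => 1)).
Qed.

Lemma MbD p n (mu : 'M['F_p]_n.+1) a d :
  Mb mu (a + d) = Mb mu a + mu ^+ a * Mb mu d.
Proof.
elim: d => [|d IH]; first by rewrite addn0 /Mb big_ord0 mulr0 addr0.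
by rewrite addnS /Mb !big_ord_recr /= -/(Mb mu _) IH -/(Mb mu d) mulrDr exprD addrA.
Qed.

Lemma Mb_unit p n (mu : 'M['F_p]_n.+1) c : prime p -> mu ^+ p = 1 ->
  (0 < c)%N -> (c < p)%N -> Mb mu c \in unitmx.
Proof.
move=> pp mup c0 cp.
rewrite unitmxE unitfE; apply/negP => /det0P [v vnz hv].
have comm : Mb mu c * mu = mu * Mb mu c.
  by rewrite /Mb mulr_suml mulr_sumr; apply: eq_bigr => i _; rewrite -exprSr -exprS.
have h1 : v *m mu ^+ c = v.
  have : v *m (mu ^+ c - 1) = 0.
    rewrite subrX1 -/(Mb mu c) mulrBl mul1r -comm -{2}(mulr1 (Mb mu c)) -mulrBr.
    by rewrite -mulmxE mulmxA hv mul0mx.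
  by rewrite mulmxBr mulmx1 => /eqP; rewrite subr_eq0 => /eqP.
have hpow : forall m, v *m mu ^+ (c * m) = v.
  elim=> [|m IH]; first by rewrite muln0 expr0 mulmx1.
  by rewrite mulnS exprD -mulmxE mulmxA h1 IH.
have h2 : v *m mu = v.
  case: (egcdnP p c0) => km kn hk _.
  have g1 : gcdn c p = 1%N.
    apply/eqP; rewrite gcdnC -/(coprime p c) prime_coprime //.
    by apply/negP => /(dvdn_leq c0); rewrite leqNgt cp.
  rewrite g1 in hk.
  by rewrite -{2}(hpow km) mulnC hk exprD mulnC exprM mup expr1n mul1r.
have h3 : forall i, v *m mu ^+ i = v.
  elim=> [|i IH]; first by rewrite expr0 mulmx1.
  by rewrite exprS -mulmxE mulmxA h2 IH.
have : v *m Mb mu c = v *+ c.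
  rewrite /Mb mulmx_sumr (eq_bigr (fun _ => v)); last by move=> i _; rewrite h3.
  by rewrite sumr_const card_ord.
rewrite hv -scaler_nat => /esym /eqP; rewrite scaler_eq0 (negbTE vnz) orbF.
apply/negP; apply/eqP => /(congr1 val) /=.
by rewrite val_Fp_nat // modn_small //; move=> e; rewrite e in c0.
Qed.

Lemma Mb_diff_unit p n (mu : 'M['F_p]_n.+1) a b : prime p -> mu ^+ p = 1 ->
  mu \in unitmx -> (a < p)%N -> (b < p)%N -> a != b -> Mb mu a - Mb mu b \in unitmx.
Proof.
move=> pp mup muu ap bp ab.
have key : forall a b, (b < a)%N -> (a < p)%N -> Mb mu a - Mb mu b \in unitmx.
  move=> a' b' ba ap'.
  rewrite -(subnKC (ltnW ba)) MbD addrC addKr.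
  rewrite -mulmxE unitmx_mul; apply/andP; split.
    exact: (unitrX _ muu).
  by apply: Mb_unit => //; [rewrite subn_gt0 | apply: leq_ltn_trans ap'; apply: leq_subr].
case: (ltngtP a b) => [lt|gt|eq]; last by rewrite eq eqxx in ab.
  by rewrite -opprB -[_ \in unitmx]/(_ \is a GRing.unit) unitrN; exact: key.
exact: key.
Qed.

Lemma cnt_shift p n k (D : 'I_k -> 'M['F_p]_n.+1) j0 (v : 'cV['F_p]_n.+1) :
  D j0 \in unitmx ->
  \sum_(x : {ffun 'I_k -> 'cV['F_p]_n.+1}) (((\sum_j D j *m x j) == v)%:R : rat)
  = \sum_(x : {ffun 'I_k -> 'cV['F_p]_n.+1}) (((\sum_j D j *m x j) == 0)%:R : rat).
Proof.
move=> Hu.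
pose e : {ffun 'I_k -> 'cV['F_p]_n.+1} :=
  [ffun j => if j == j0 then invmx (D j0) *m v else 0].
rewrite (reindex_inj (addrI e)) /=; apply: eq_bigr => x _.
have -> : \sum_j D j *m (e + x) j = v + \sum_j D j *m x j.
  rewrite (eq_bigr (fun j => D j *m e j + D j *m x j)); last first.
    by move=> j _; rewrite ffunE mulmxDr.
  rewrite big_split /=; congr (_ + _).
  rewrite (bigD1 j0) //= big1 ?addr0.
    by rewrite ffunE eqxx mulmxA mulmxV // mul1mx.
  by move=> j /negbTE jn; rewrite ffunE jn mulmx0.
by rewrite -{2}(addr0 v) (inj_eq (addrI v)).
Qed.

Lemma cnt0 p n k (D : 'I_k -> 'M['F_p]_n.+1) j0 : prime p ->
  D j0 \in unitmx ->
  \sum_(x : {ffun 'I_k -> 'cV['F_p]_n.+1}) (((\sum_j D j *m x j) == 0)%:R : rat)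
  = #|{ffun 'I_k -> 'cV['F_p]_n.+1}|%:R / (p ^ n.+1)%:R.
Proof.
move=> pp Hu.
have tot : \sum_(v : 'cV['F_p]_n.+1) \sum_(x : {ffun 'I_k -> 'cV['F_p]_n.+1})
    (((\sum_j D j *m x j) == v)%:R : rat) = #|{ffun 'I_k -> 'cV['F_p]_n.+1}|%:R.
  rewrite exchange_big /= (eq_bigr (fun _ => 1)); last by move=> x _; exact: sum_eq1'.
  by rewrite sumr_const.
rewrite (eq_bigr _ (fun v _ => cnt_shift v Hu)) sumr_const card_mx card_Fp // muln1 in tot.
rewrite -tot -[_ *+ _]mulr_natr mulfK // pnatr_eq0 expn_eq0 negb_and.
by rewrite -lt0n prime_gt0.
Qed.

Section Main.
Variables (p n k : nat) (mu : 'M['F_p]_n.+1).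
Hypotheses (pp : prime p) (mup : mu ^+ p = 1) (muu : mu \in unitmx).
Local Notation V := 'cV['F_p]_n.+1.
Local Notation X := {ffun 'I_k -> 'cV['F_p]_n.+1}.
Local Notation B := {ffun 'I_k -> 'I_p}.
Definition Sb (b : B) (x : X) : V := \sum_(j<k) Mb mu (b j) *m x j.

Lemma etaE (x : X) (w : V) : ((eta mu x w)%:R : rat) = \sum_(b : B) ((Sb b x == w)%:R : rat).
Proof.
rewrite /eta -sum1dep_card big_mkcond natr_sum /=.
by apply: eq_bigr => b _; rewrite /Sb; case: (_ == _).
Qed.

Lemma sum_eta (x : X) : \sum_(w : V) ((eta mu x w)%:R : rat) = #|B|%:R.
Proof.
rewrite (eq_bigr _ (fun w _ => etaE x w)) exchange_big /=.
rewrite (eq_bigr (fun _ => 1)); last by move=> b _; exact: sum_eq1'.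
by rewrite sumr_const.
Qed.

Lemma cnt_pair (b b' : B) : \sum_(x : X) ((Sb b' x == Sb b x)%:R : rat)
  = if b' == b then #|X|%:R else #|X|%:R / (p ^ n.+1)%:R.
Proof.
case: eqP => [->|neq].
  by rewrite (eq_bigr (fun _ => 1)) ?sumr_const // => x _; rewrite eqxx.
have : ~~ [forall j, b' j == b j].
  by apply/negP => /forallP h; apply: neq; apply/ffunP => j; exact/eqP/h.
rewrite negb_forall => /existsP [j0 hj].
rewrite (eq_bigr (fun x : X => (((\sum_j (Mb mu (b' j) - Mb mu (b j)) *m x j) == 0)%:R : rat))).
  by apply: (cnt0 (j0:=j0) pp); apply: Mb_diff_unit => //; exact: hj.
by move=> x _; rewrite -subr_eq0 /Sb -sumrB; congr ((_ == _)%:R);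
  apply: eq_bigr => j _; rewrite mulmxBl.
Qed.

Lemma sum_eta2 : \sum_(x : X) \sum_(w : V) (((eta mu x w)%:R : rat) ^+ 2)
  = #|B|%:R * (#|X|%:R + (#|B|%:R - 1) * (#|X|%:R / (p ^ n.+1)%:R)).
Proof.
transitivity (\sum_(x : X) \sum_(b : B) \sum_(b' : B) ((Sb b' x == Sb b x)%:R : rat)).
  apply: eq_bigr => x _.
  rewrite (eq_bigr (fun w => \sum_(b : B) \sum_(b' : B)
      ((Sb b x == w)%:R * (Sb b' x == w)%:R : rat))); last first.
    by move=> w _; rewrite etaE expr2 big_distrlr.
  rewrite exchange_big; apply: eq_bigr => b _ /=.
  rewrite exchange_big; apply: eq_bigr => b' _ /=.
  by rewrite (sum_eq1 (Sb b x) (fun w => (Sb b' x == w)%:R)).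
rewrite exchange_big /=.
rewrite (eq_bigr (fun b => #|X|%:R + (#|B|%:R - 1) * (#|X|%:R / (p ^ n.+1)%:R))).
  by rewrite sumr_const -[_ *+ _]mulr_natl.
move=> b _; rewrite exchange_big /= (eq_bigr _ (fun b' _ => cnt_pair b b')).
rewrite (eq_bigr (fun b' => #|X|%:R / (p ^ n.+1)%:R + (b == b')%:R *
     (#|X|%:R - #|X|%:R / (p ^ n.+1)%:R))); last first.
  by move=> b' _; rewrite eq_sym; case: eqP => _; rewrite ?mul1r ?mul0r ?addr0 // addrC subrK.
rewrite big_split /= sum_eq1 sumr_const -mulr_natl.
by ring.
Qed.
End Main.


Theorem mainTheorem11 (p r k : nat) (mu : 'M['F_p]_r) :
  prime p -> (0 < r)%N -> (0 < k)%N ->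
  mu \in unitmx -> mu ^+ p = 1 ->
  unif_mean (fun xw : {ffun 'I_k -> 'cV['F_p]_r} * 'cV['F_p]_r =>
               (eta mu xw.1 xw.2)%:R)
    = (p%:Q) ^ (k%:Z - r%:Z)
  /\
  unif_var (fun xw : {ffun 'I_k -> 'cV['F_p]_r} * 'cV['F_p]_r =>
               (eta mu xw.1 xw.2)%:R)
    = (p%:Q) ^ (k%:Z - r%:Z) * (1 - (p%:Q) ^ (- r%:Z)).
Proof.
move=> pp r0 k0.
case: r mu r0 => [|n] mu r0 // muu mup.
have pair : forall F : ({ffun 'I_k -> 'cV['F_p]_n.+1} * 'cV['F_p]_n.+1) -> rat, \sum_xw F xw = \sum_(x : {ffun 'I_k -> 'cV['F_p]_n.+1}) \sum_(w : 'cV['F_p]_n.+1) F (x, w).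
  by move=> F; rewrite pair_big /=; apply: eq_bigr => -[].
have P0 : (p%:R != 0 :> rat) by rewrite pnatr_eq0 -lt0n prime_gt0.
have cV : #|{: 'cV['F_p]_n.+1}| = (p ^ n.+1)%N by rewrite card_mx card_Fp // muln1.
have cB : #|{: {ffun 'I_k -> 'I_p}}| = (p ^ k)%N by rewrite card_ffun !card_ord.
have X0 : (#|{: {ffun 'I_k -> 'cV['F_p]_n.+1}}|%:R : rat) != 0.
  by rewrite pnatr_eq0 -lt0n card_ffun cV card_ord !expn_gt0 prime_gt0.
have sumf : \sum_(xw : ({ffun 'I_k -> 'cV['F_p]_n.+1} * 'cV['F_p]_n.+1)) ((eta mu xw.1 xw.2)%:R : rat) = #|{: {ffun 'I_k -> 'cV['F_p]_n.+1}}|%:R * #|{: {ffun 'I_k -> 'I_p}}|%:R.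
  rewrite pair /= (eq_bigr _ (fun x _ => sum_eta mu x)) sumr_const.
  by rewrite -[_ *+ _]mulr_natl.
have sumf2 : \sum_(xw : ({ffun 'I_k -> 'cV['F_p]_n.+1} * 'cV['F_p]_n.+1)) ((eta mu xw.1 xw.2)%:R : rat) ^+ 2
    = #|{: {ffun 'I_k -> 'I_p}}|%:R * (#|{: {ffun 'I_k -> 'cV['F_p]_n.+1}}|%:R + (#|{: {ffun 'I_k -> 'I_p}}|%:R - 1) * (#|{: {ffun 'I_k -> 'cV['F_p]_n.+1}}|%:R / (p ^ n.+1)%:R)).
  by rewrite pair /= sum_eta2.
have pq : p%:Q = p%:R by [].
rewrite pq.
have expE : (p%:R : rat) ^ (k%:Z - n.+1%:Z) = p%:R ^+ k / p%:R ^+ n.+1.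
  by rewrite expfzDr // -exprnN.
have mean : unif_mean (fun xw : ({ffun 'I_k -> 'cV['F_p]_n.+1} * 'cV['F_p]_n.+1) => ((eta mu xw.1 xw.2)%:R : rat))
    = p%:R ^+ k / p%:R ^+ n.+1.
  rewrite /unif_mean sumf card_prod cV cB !natrM !natrX.
  by field; rewrite X0 andbT expf_neq0 // pnatr_eq0 -lt0n prime_gt0.
split; first by rewrite mean expE.
rewrite /unif_var mean /unif_mean.
set m := p%:R ^+ k / p%:R ^+ n.+1.
rewrite (eq_bigr (fun t : ({ffun 'I_k -> 'cV['F_p]_n.+1} * 'cV['F_p]_n.+1) => ((eta mu t.1 t.2)%:R : rat) ^+ 2
     - (m *+ 2) * (eta mu t.1 t.2)%:R + m ^+ 2)); last by move=> t _; ring.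
rewrite big_split sumrB /= -mulr_sumr sumf sumf2 sumr_const -[_ *+ #|_|]mulr_natr.
rewrite expE -exprnN /m card_prod cV cB !natrM !natrX.
by field; rewrite X0 andbT expf_neq0 // pnatr_eq0 -lt0n prime_gt0.
Qed.
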